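(* Let $a,b,c,d\in\{1,\dots,\ell\}$ be distinct. For all positive integers $m,n,r,s$, in $A(\mathcal{H}^+)$ we have $[S_{abcd}(m,n,r,s)]=(-1)^{m+n+r+s}[S_{abcd}(1,1,1,1)]$, where $S_{abcd}(m,n,r,s)=h_a(-m)h_b(-n)h_c(-r)h_d(-s)\mathbf{1}$.
   Context: $\mathfrak{h}$ is an $\ell$-dimensional complex space with orthonormal basis $h_1,\dots,h_\ell$; $\mathcal{H}=M(1,0)$ is the free bosonic vertex operator algebra generated by Heisenberg modes $h(n)$ acting on the vacuum $\mathbf{1}$; $\mathcal{H}^+$ is the fixed-point subalgebra of the automorphism induced by $h\mapsto-h$. $A(\mathcal{H}^+)=\mathcal{H}^+/O(\mathcal{H}^+)$ is Zhu's algebra, $O(\mathcal{H}^+)$ spanned by $u\circ v=\sum_{i\ge0}\binom{\mathrm{wt}\,u}{i}u_{i-2}v$, product induced by $u*v=\sum_{i\ge0}\binom{\mathrm{wt}\,u}{i}u_{i-1}v$; $[u]=u+O(\mathcal{H}^+)$. *)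

(* Defs.v *)
From HB Require Import structures.
From mathcomp Require Import all_boot all_order all_algebra.
From mathcomp Require Import finmap.
From mathcomp Require Import monalg.

Set Implicit Arguments.
Unset Strict Implicit.
Unset Printing Implicit Defensive.

Import Order.TTheory GRing.Theory Num.Theory.
Local Open Scope ring_scope.

(* The free bosonic VOA  H = M(1,0)  for an l-dimensional space h with       *)
(* orthonormal basis h_0,...,h_(l-1) (indices shifted by one w.r.t. the      *)
(* paper), over a numeric algebraically closed field C (e.g. the complex     *)
(* numbers).  As a vector space M(1,0) = S(h ⊗ t^-1 C[t^-1]) is the          *)
(* polynomial algebra in the variables  x_(i,k) := h_i(-(k+1)),  i < l,      *)
(* k : nat; the vacuum 1 is the constant polynomial 1.                       *)

Definition hvarT (l : nat) := ('I_l * nat)%type.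

Definition Fock (l : nat) (C : numClosedFieldType) :=
  {malg C[cmonom (hvarT l)]}.

Section Heisenberg.
Variables (l : nat) (C : numClosedFieldType).
Local Notation V := (Fock l C).

(* creation operator h_i(-(k+1)) acting on M(1,0): multiplication by x_(i,k) *)
Definition hvar (i : 'I_l) (k : nat) : V := << ucm ((i, k) : hvarT l) >>.

Definition pderiv (w : hvarT l) (g : V) : V :=
  \sum_(m <- msupp g) << (g@_m * (m w)%:R) *g divcm m (ucm w) >>.

(* annihilation operator h_a(j), j >= 0:  h_a(0) = 0 on M(1,0),
   h_a(j) = j d/dx_(a,j-1) for j > 0  (from [h_a(m),h_b(n)] = m d_ab d_m+n,0) *)
Definition hann (a : 'I_l) (j : nat) (g : V) : V :=
  if j is j'.+1 then j%:R *: pderiv (a, j') g else 0.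

(* weight (L(0)-eigenvalue) of a monomial: wt h_i(-(k+1)) = k+1 *)
Definition mwt (m : cmonom (hvarT l)) : nat :=
  (\sum_(w <- finsupp m) m w * w.2.+1)%N.

Definition maxwt (g : V) : nat := (\max_(m <- msupp g) mwt m)%N.

Definition factors (m : cmonom (hvarT l)) : seq (hvarT l) :=
  flatten [seq nseq (m w) w | w <- enum_fset (finsupp m)].

End Heisenberg.

Definition gbinom (C : fieldType) (x : int) (k : nat) : C :=
  (\prod_(i < k) (x - i%:Z)%:~R) / (k`!)%:R.

Section Modes.
Variables (l : nat) (C : numClosedFieldType).
Local Notation V := (Fock l C).

(* The normal ordered product
     :  prod_{(a,k) in fs}  d^(k) h_a(z) :   (d^(k) = (d/dz)^k / k!)
   with  d^(k) h_a(z) = sum_j binom(-j-1,k) h_a(j) z^(-j-k-1).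
   [nopart B fs t v] is the sum, over all choices of modes j (one for each
   factor in fs, each in [-B,B]) with total sum t, of
     (prod binom(-j-1,k)) * (creation modes) (annihilation modes) v.
   Creation modes (j < 0) are applied after all annihilation modes (j >= 0):
   this is the normal ordering. *)
Fixpoint nopart (B : nat) (fs : seq (hvarT l)) (t : int) (v : V) : V :=
  match fs with
  | [::] => if t == 0 then v else 0
  | (a, k) :: fs' =>
      \sum_(j < (B + B).+1)
        let jj : int := j%:Z - B%:Z in
        gbinom C (- jj - 1) k *:
          (if jj < 0 then hvar C a `|jj|.-1 * nopart B fs' (t - jj) v
           else nopart B fs' (t - jj) (hann a `|jj| v))
  end.

(* For u = h_a1(-n1)...h_ak(-nk)1,  Y(u,z) = : d^(n1-1)h_a1(z) ... d^(nk-1)h_ak(z) :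
   and u_p is the coefficient of z^(-p-1), i.e. the sum over the modes with
   sum_t (j_t + n_t) = p + 1.  Acting on v only modes in [-B,B] with the bound
   B below can contribute (annihilation modes are <= maxwt v, and then the
   creation modes are determined up to this bound), so the truncation is
   exact. *)
Definition mono_mode (m : cmonom (hvarT l)) (p : int) (v : V) : V :=
  let fs := factors m in
  let N := (\sum_(w <- fs) w.2.+1)%N in
  let B := ((size fs).+1 * maxwt v + N + `|p| + 1)%N in
  nopart B fs (p + 1 - N%:Z) v.

(* the mode u_p of the vertex operator Y(u,z) = sum_p u_p z^(-p-1),
   extended linearly in u *)
Definition vmode (u : V) (p : int) (v : V) : V :=
  \sum_(m <- msupp u) u@_m *: mono_mode m p v.

Definition homog (w : nat) (u : V) : Prop :=
  forall m, m \in msupp u -> mwt m = w.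

(* H^+ : fixed points of the automorphism induced by h -> -h, i.e. the
   span of the monomials of even degree *)
Definition in_Hplus (u : V) : Prop :=
  forall m, m \in msupp u -> ~~ odd (mdeg m).

Definition zcirc (w : nat) (u v : V) : V :=
  \sum_(i < w.+1) ('C(w, i))%:R *: vmode u (i%:Z - 2) v.

Definition in_O_Hplus (x : V) : Prop :=
  exists s : seq (C * nat * V * V),
    (forall e, e \in s -> [/\ homog e.1.1.2 e.1.2, in_Hplus e.1.2 & in_Hplus e.2])
    /\ x = \sum_(e <- s) e.1.1.1 *: zcirc e.1.1.2 e.1.2 e.2.

(* equality of classes in Zhu's algebra A(H^+) = H^+/O(H^+):
   [u] = [v]  iff  u - v \in O(H^+) *)
Definition zhu_class_eq (u v : V) : Prop := in_O_Hplus (u - v).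

Definition S_abcd (a b c d : 'I_l) (m n r s : nat) : V :=
  hvar C a m.-1 * hvar C b n.-1 * hvar C c r.-1 * hvar C d s.-1 * 1.

End Modes.

(* Main.v *)
Require Import Defs.
From HB Require Import structures.
From mathcomp Require Import all_boot all_order all_algebra.
From mathcomp Require Import finmap.
From mathcomp Require Import monalg.
From mathcomp Require Import zify ring.
Import GRing.Theory Num.Theory.
Local Open Scope ring_scope.

Set Implicit Arguments.
Unset Strict Implicit.
Unset Printing Implicit Defensive.

Section S.
Variables (l : nat) (C : numClosedFieldType).
Local Notation V := (Fock l C).

Definition freeof (a : 'I_l) (v : V) :=
  forall mo, mo \in msupp v -> forall j, mo (a, j) = 0%N.

Lemma pderiv_free a j (v : V) : freeof a v -> pderiv (a, j) v = 0.
Proof.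
move=> H; rewrite /pderiv big1_seq // => mo /= Hm.
by rewrite H // mulr0 monalgU0.
Qed.

Lemma hann_free a j (v : V) : freeof a v -> hann a j v = 0.
Proof. by case: j => [|j] //= H; rewrite pderiv_free // scaler0. Qed.

Lemma hann0 a j : hann a j (0 : V) = 0.
Proof. by case: j => [|j] //=; rewrite /pderiv msupp0 big_seq_fset0 scaler0. Qed.

Lemma nopart0 B fs t : @nopart l C B fs t (0 : V) = 0.
Proof.
elim: fs t => [|[a k] fs IH] t /=; first by case: ifP.
rewrite big1 // => j _; case: ifP => _; by rewrite ?hann0 IH ?mulr0 scaler0.
Qed.

Lemma CV : comRingType.
Proof. exact: (V : comRingType). Qed.

Lemma prod_ffact (n k : nat) :
  \prod_(i < k) ((n%:Z - i%:Z)%:~R : C) = (n ^_ k)%:R.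
Proof.
elim: k => [|k IH]; first by rewrite big_ord0 ffactn0.
rewrite big_ord_recr /= IH ffactnSr natrM.
case: (leqP k n) => Hk.
  by rewrite subzn // intr_nat.

by rewrite ffact_small //= !mul0r.
Qed.

Lemma gbinom_nat (n k : nat) : gbinom C n%:Z k = ('C(n, k))%:R.
Proof.
rewrite /gbinom prod_ffact -bin_ffact natrM mulfK //.
by rewrite pnatr_eq0 -lt0n fact_gt0.
Qed.

Definition inw (B : nat) (z : int) := (- (B%:Z) <= z) && (z <= B%:Z).

Lemma sum_window (B : nat) (G : int -> V) (S : seq int) :
  uniq S -> all (inw B) S -> (forall z, inw B z -> z \notin S -> G z = 0) ->
  \sum_(j < (B + B).+1) G (j%:Z - B%:Z) = \sum_(z <- S) G z.
Proof.
move=> US AS HG.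
rewrite -(big_mkord xpredT (fun j : nat => G (j%:Z - B%:Z))).
rewrite -(big_map (fun j : nat => j%:Z - B%:Z) xpredT G).
set L := map _ _.
have memL z : (z \in L) = inw B z.
  apply/mapP/idP.
    case=> j; rewrite mem_iota add0n => /andP[_ Hj] ->.
    rewrite /inw; apply/andP; split; lia.
  move=> /andP[H1 H2]; exists (absz (z + B%:Z)).
    rewrite mem_iota add0n /=; lia.
  lia.
have UL : uniq L.
  rewrite map_inj_uniq ?iota_uniq // => x y /addIr; by case.
rewrite (bigID (fun z => z \in S)) /= [X in _ + X]big1_seq ?addr0; last first.
  by move=> z /andP[Hn Hz]; apply: HG => //; rewrite -memL.
rewrite -big_filter; apply: perm_big.
apply: uniq_perm; first exact: filter_uniq.
  exact: US.
move=> z; rewrite mem_filter memL andbC.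
case Hz: (z \in S); rewrite ?andbF ?andbT //=.
by move/allP: AS => /(_ z Hz).
Qed.

Lemma gbinomN (n k : nat) : gbinom C (- (Negz n) - 1) k = ('C(n, k))%:R.
Proof. have -> : - Negz n - 1 = n%:Z by rewrite NegzE; lia. exact: gbinom_nat. Qed.

Lemma nopart1 B b k (t : int) (v : V) : freeof b v ->
  nopart B [:: (b, k)] t v =
  match t with
  | Negz m => if inw B t then ('C(m, k))%:R *: (hvar C b m * v) else 0
  | Posz _ => 0
  end.
Proof.
move=> Hb.
pose G (z : int) : V := gbinom C (- z - 1) k *:
          (if z < 0 then hvar C b `|z|.-1 * nopart B [::] (t - z) v
           else nopart B [::] (t - z) (hann b `|z| v)).
have -> : nopart B [:: (b, k)] t v = \sum_(j < (B + B).+1) G (j%:Z - B%:Z) by [].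
have HG z : G z = if z == t then
     (match t with Negz m => ('C(m, k))%:R *: (hvar C b m * v) | Posz _ => 0 end)
     else 0.
  rewrite /G /= subr_eq0 [t == z]eq_sym.
  case: eqP => [->|_]; last by case: ifP => _; rewrite ?mulr0 scaler0.
  clear G; case: t => [n|n] /=.
    by rewrite hann_free // scaler0.
  by rewrite gbinomN.
clearbody G; move: HG; case: t => [n|n] HG.
  rewrite (@sum_window B G [::]) ?big_nil // => z _ _.
  by rewrite HG; case: ifP.
case: ifP => Hw.
  rewrite (@sum_window B G [:: Negz n]) ?big_seq1 /= ?andbT //.
  - by rewrite HG eqxx.
  - by move=> z _; rewrite inE HG => /negbTE ->.
rewrite (@sum_window B G [::]) ?big_nil // => z Hz _.
rewrite HG; case: eqP => // Ez; by rewrite -Ez Hz in Hw.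
Qed.

End S.

Section S.
Variables (l : nat) (C : numClosedFieldType).
Local Notation V := (Fock l C).
Ltac z0 := with_strategy opaque [Algebra.zero] reflexivity.
Lemma genS (K : nzRingType) (W : algType K) (c1 c2 : K) (x y : W) :
  c1 *: (x * (c2 *: y)) = (c1 * c2) *: (x * y).
Proof. by rewrite -scalerAr scalerA. Qed.

Definition F2 B a k1 b k2 (t : int) (v : V) (z : int) : V :=
  match z with
  | Negz n => match t - z with
              | Negz m => if inw B (t - z) then
                   ('C(n, k1) * 'C(m, k2))%:R *: (hvar C a n * (hvar C b m * v))
                 else 0
              | Posz _ => 0 end
  | Posz _ => 0
  end.

Lemma nopart2E B a k1 b k2 t (v : V) : freeof a v -> freeof b v ->
  nopart B [:: (a, k1); (b, k2)] t v =
  \sum_(j < (B + B).+1) F2 B a k1 b k2 t v (j%:Z - B%:Z).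
Proof.
move=> Ha Hb.
pose G (z : int) : V := gbinom C (- z - 1) k1 *:
          (if z < 0 then hvar C a `|z|.-1 * nopart B [:: (b, k2)] (t - z) v
           else nopart B [:: (b, k2)] (t - z) (hann a `|z| v)).
have -> : nopart B [:: (a, k1); (b, k2)] t v = \sum_(j < (B + B).+1) G (j%:Z - B%:Z) by [].
apply: eq_bigr => j _; move: (j%:Z - B%:Z) => z.
rewrite /G /F2; case: z => [n|n].
  have -> : (n%:Z < 0) = false by [].
  by rewrite hann_free // nopart0 scaler0.
have -> : (Negz n < 0) = true by [].
rewrite gbinomN nopart1 //.
have -> : `|Negz n|.-1 = n by [].
case: (t - Negz n) => [m|m].
  rewrite mulr0 scaler0; with_strategy opaque [Algebra.zero] reflexivity.
case: (inw B (Negz m)).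
  rewrite natrM; exact: genS.
rewrite mulr0 scaler0; with_strategy opaque [Algebra.zero] reflexivity.
Qed.

Lemma F2_zero B a k1 b k2 t (v : V) (S : seq int) z :
  (forall n m, z = Negz n -> t - z = Negz m -> (k1 <= n)%N -> (k2 <= m)%N -> z \in S) ->
  z \notin S -> F2 B a k1 b k2 t v z = 0.
Proof.
move=> H Hz; rewrite /F2.
case Ez: z => [n|n]; first z0.
case Etz: (t - Negz n) => [m|m]; first z0.
case: (inw B (Negz m)); last z0.
case: (leqP k1 n) => H1; first last.
  rewrite bin_small // mul0n scale0r; z0.
case: (leqP k2 m) => H2; first last.
  rewrite (bin_small H2) muln0 scale0r; z0.
have Hin : z \in S by apply: (H n m Ez) => //; rewrite Ez.
by rewrite Hin in Hz.
Qed.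
End S.

Section S.
Variables (l : nat) (C : numClosedFieldType).
Local Notation V := (Fock l C).
Ltac z0 := with_strategy opaque [Algebra.zero] reflexivity.

Lemma inwN B k : (k < B)%N -> inw B (Negz k).
Proof. move=> H; rewrite /inw NegzE; apply/andP; split; lia. Qed.

Lemma nopart2_m1 B a k1 b k2 t (v : V) : freeof a v -> freeof b v ->
  (k1 + k2 + 3 <= B)%N -> t = - ((k1 + k2 + 2)%N%:Z) ->
  nopart B [:: (a, k1); (b, k2)] t v = hvar C a k1 * (hvar C b k2 * v).
Proof.
move=> Ha Hb HB Ht; rewrite nopart2E //.
rewrite (@sum_window _ _ B _ [:: Negz k1]); first last.
  - move=> z _ Hz; apply: F2_zero Hz => n m -> Em H1 H2.
    rewrite inE; suff -> : n = k1 by [].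
    by move: Em; rewrite Ht !NegzE; lia.
  - by rewrite /= inwN //; lia.
  - by [].
rewrite big_seq1 /F2.
have -> : t - Negz k1 = Negz k2 by rewrite Ht !NegzE; lia.
rewrite inwN; last by lia.
by rewrite !binn muln1 scale1r.
Qed.

Lemma nopart2_m2 B a k1 b k2 t (v : V) : freeof a v -> freeof b v ->
  (k1 + k2 + 4 <= B)%N -> t = - ((k1 + k2 + 3)%N%:Z) ->
  nopart B [:: (a, k1); (b, k2)] t v =
    (k2.+1)%:R *: (hvar C a k1 * (hvar C b k2.+1 * v)) +
    (k1.+1)%:R *: (hvar C a k1.+1 * (hvar C b k2 * v)).
Proof.
move=> Ha Hb HB Ht; rewrite nopart2E //.
rewrite (@sum_window _ _ B _ [:: Negz k1; Negz k1.+1]); first last.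
  - move=> z _ Hz; apply: F2_zero Hz => n m -> Em H1 H2.
    rewrite !inE; have : n = k1 \/ n = k1.+1.
      by move: Em; rewrite Ht !NegzE; lia.
    by case=> ->; rewrite eqxx ?orbT.
  - by rewrite /= !inwN //; lia.
  - by rewrite /= inE andbT; apply/eqP; case; lia.
rewrite big_cons big_seq1 /F2.
have -> : t - Negz k1 = Negz k2.+1 by rewrite Ht !NegzE; lia.
have -> : t - Negz k1.+1 = Negz k2 by rewrite Ht !NegzE; lia.
rewrite !inwN; try lia.
rewrite binn !binSn mul1n binn muln1.
with_strategy opaque [Algebra.add Algebra.zero] reflexivity.
Qed.

Lemma nopart2_ge B a k1 b k2 t (v : V) : freeof a v -> freeof b v ->
  - ((k1 + k2 + 1)%N%:Z) <= t ->
  nopart B [:: (a, k1); (b, k2)] t v = 0.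
Proof.
move=> Ha Hb Ht; rewrite nopart2E //.
rewrite (@sum_window _ _ B _ [::]); [rewrite big_nil; z0 | by [] | by [] | ].
move=> z _ Hz.
apply: F2_zero Hz => n m -> Em H1 H2.
by move: Em; rewrite !NegzE; lia.
Qed.
End S.

Section S.
Variables (l : nat) (C : numClosedFieldType).
Local Notation V := (Fock l C).
Ltac z0 := with_strategy opaque [Algebra.zero] reflexivity.

Lemma seq2_cases (T : eqType) (s : seq T) (x y : T) : x != y -> uniq s ->
  (forall w, (w \in s) = (w == x) || (w == y)) -> s = [:: x; y] \/ s = [:: y; x].
Proof.
move=> Hxy Us Hs.
have P : perm_eq s [:: x; y].
  apply: uniq_perm => //; first by rewrite /= inE Hxy.
  by move=> w; rewrite Hs !inE.
have := perm_size P; case: s Us Hs P => [|u [|w [|]]] //= Us Hs P _.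
have Hu := Hs u; have Hw := Hs w; rewrite !inE !eqxx ?orbT /= in Hu Hw.
move: Us; rewrite /= inE andbT.
move: Hu Hw => /esym/orP[]/eqP-> /esym/orP[]/eqP->; rewrite ?eqxx //.
  by left.
by right.
Qed.

Lemma factors2 (x y : hvarT l) : x != y ->
  factors (mmul (ucm x) (ucm y)) = [:: x; y] \/ factors (mmul (ucm x) (ucm y)) = [:: y; x].
Proof.
move=> Hxy; set mo := (mmul (ucm x) (ucm y)).
have Hm w : mo w = ((x == w) + (y == w))%N by rewrite cmM !cmU.
have Hsupp w : (w \in finsupp mo) = (w == x) || (w == y).
  by rewrite /mo mdomD !mdomU in_fsetU !in_fset1.
have E : factors mo = enum_fset (finsupp mo).
  rewrite /factors.
  have : all (fun w => mo w == 1%N) (enum_fset (finsupp mo)).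
    apply/allP => w; rewrite Hsupp Hm => /orP[]/eqP->; rewrite eqxx /=.
      by case: (y =P x) => [E|//]; rewrite E eqxx in Hxy.
    by case: (x =P y) => [E|//]; rewrite E eqxx in Hxy.
  elim: (enum_fset _) => //= w s IH /andP[/eqP -> /IH ->] //.
rewrite E; apply: seq2_cases => //; exact: fset_uniq.
Qed.

Lemma vmode_u a k1 b k2 p (v : V) :
  vmode (hvar C a k1 * hvar C b k2) p v = mono_mode (mmul (ucm (a, k1)) (ucm (b, k2))) p v.
Proof.
rewrite /vmode /hvar malgM_def fgmulUU mulr1 msuppU1 big_seq_fset1 mcoeffUU scale1r.
by [].
Qed.

Lemma mono_mode2 a k1 b k2 p (v : V) : a != b ->
  exists B : nat, (k1 + k2 + 3 + absz p <= B)%N /\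
   (mono_mode (mmul (ucm (a, k1)) (ucm (b, k2))) p v =
      nopart B [:: (a, k1); (b, k2)] (p + 1 - (k1 + k2 + 2)%N%:Z) v \/
    mono_mode (mmul (ucm (a, k1)) (ucm (b, k2))) p v =
      nopart B [:: (b, k2); (a, k1)] (p + 1 - (k1 + k2 + 2)%N%:Z) v).
Proof.
move=> Hab.
have Hxy : (a, k1) != (b, k2) by rewrite xpair_eqE negb_and Hab.
rewrite /mono_mode; case: (factors2 Hxy) => ->; rewrite big_cons big_seq1 /=.
  have -> : (k1.+1 + k2.+1 = k1 + k2 + 2)%N by lia.
  eexists; split; last by left; reflexivity.
  lia.
have -> : (k2.+1 + k1.+1 = k1 + k2 + 2)%N by lia.
eexists; split; last by right; reflexivity.
lia.
Qed.

End S.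

Section S.
Variables (l : nat) (C : numClosedFieldType).
Local Notation V := (Fock l C).
Ltac z0 := with_strategy opaque [Algebra.zero] reflexivity.

Section Mono.
Variables (a b : 'I_l) (k1 k2 : nat) (v : V).
Hypotheses (Hab : a != b) (Ha : freeof a v) (Hb : freeof b v).
Local Notation mo := (mmul (ucm (a, k1)) (ucm (b, k2))).

Lemma mono_m1 : mono_mode mo (-1) v = hvar C a k1 * (hvar C b k2 * v).
Proof.
have E1 : absz (-1) = 1%N by [].
have [B [HB [->|->]]] := mono_mode2 k1 k2 (-1) v Hab.
  rewrite E1 in HB.
  apply: nopart2_m1 => //.
  lia.
  lia.
rewrite E1 in HB.
rewrite (nopart2_m1 (B:=B) (a:=b) (k1:=k2) (b:=a) (k2:=k1)); [exact: mulrCA | exact: Hb | exact: Ha | lia | lia].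
Qed.

Lemma mono_m2 : mono_mode mo (-2) v =
    (k2.+1)%:R *: (hvar C a k1 * (hvar C b k2.+1 * v)) +
    (k1.+1)%:R *: (hvar C a k1.+1 * (hvar C b k2 * v)).
Proof.
have E1 : absz (-2) = 2%N by [].
have [B [HB [->|->]]] := mono_mode2 k1 k2 (-2) v Hab.
  rewrite E1 in HB.
  apply: nopart2_m2 => //.
  lia.
  lia.
rewrite E1 in HB.
rewrite (nopart2_m2 (B:=B) (a:=b) (k1:=k2) (b:=a) (k2:=k1)); [ | exact: Hb | exact: Ha | lia | lia].
apply: etrans (addrC _ _) _.
have F1 : hvar C b k2.+1 * (hvar C a k1 * v) = hvar C a k1 * (hvar C b k2.+1 * v) := mulrCA _ _ _.
have F2 : hvar C b k2 * (hvar C a k1.+1 * v) = hvar C a k1.+1 * (hvar C b k2 * v) := mulrCA _ _ _.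
exact: (congr2 (fun p q => (k2.+1)%:R *: p + (k1.+1)%:R *: q) F1 F2).
Qed.

Lemma mono_ge p : 0 <= p -> mono_mode mo p v = 0.
Proof.
move=> Hp; have [B [HB [->|->]]] := mono_mode2 k1 k2 p v Hab.
  apply: nopart2_ge; [exact: Ha | exact: Hb | lia].
apply: nopart2_ge; [exact: Hb | exact: Ha | lia].
Qed.
End Mono.

End S.

Section S.
Variables (l : nat) (C : numClosedFieldType).
Local Notation V := (Fock l C).
Ltac z0 := with_strategy opaque [Algebra.zero] reflexivity.


Lemma gen1 (K : nzRingType) (W : lmodType K) (A B : W) n :
  1 *: A + (n%:R *: B + 0) = n%:R *: B + A.
Proof. by rewrite scale1r addr0 addrC. Qed.

Lemma zcirc_rel a b k1 k2 (v : V) : a != b -> freeof a v -> freeof b v ->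
  zcirc (k1 + k2).+2 (hvar C a k1 * hvar C b k2) v =
    ((k1 + k2).+2)%:R *: (hvar C a k1 * (hvar C b k2 * v)) +
    ((k2.+1)%:R *: (hvar C a k1 * (hvar C b k2.+1 * v)) +
     (k1.+1)%:R *: (hvar C a k1.+1 * (hvar C b k2 * v))).
Proof.
move=> Hab Ha Hb.
rewrite /zcirc big_ord_recl big_ord_recl big1; last first.
  move=> i _; rewrite vmode_u (mono_ge k1 k2 Hab Ha Hb); last first.
    rewrite /=; have -> : bump 0 (bump 0 i) = i.+2 by rewrite /bump !leq0n.
    lia.
  rewrite scaler0; z0.
rewrite !vmode_u (mono_m2 k1 k2 Hab Ha Hb) (mono_m1 k1 k2 Hab Ha Hb) bin0 bin1.
exact: gen1.
Qed.
End S.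

Section S.
Variables (l : nat) (C : numClosedFieldType).
Local Notation V := (Fock l C).
Ltac z0 := with_strategy opaque [Algebra.zero] reflexivity.


Lemma mwtEw (m : cmonom (hvarT l)) (d : {fset hvarT l}) : (finsupp m `<=` d)%fset ->
  mwt m = (\sum_(i <- d) m i * i.2.+1)%N.
Proof.
move=> le; rewrite /mwt (big_fset_incl _ le) //.
by move=> i i_in_d; rewrite -cmE_neq0 negbK => /eqP ->.
Qed.

Lemma mwtM (m1 m2 : cmonom (hvarT l)) : mwt (mmul m1 m2) = (mwt m1 + mwt m2)%N.
Proof.
rewrite (@mwtEw (mmul m1 m2) (finsupp m1 `|` finsupp m2)%fset); last by rewrite mdomD.
rewrite (@mwtEw m1 _ (fsubsetUl _ (finsupp m2))) (@mwtEw m2 _ (fsubsetUr (finsupp m1) _)).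
by rewrite -big_split /=; apply/eq_bigr=> /= i _; rewrite cmM mulnDl.
Qed.

Lemma mwtU (x : hvarT l) : mwt (ucm x) = x.2.+1.
Proof. by rewrite /mwt mdomU big_seq_fset1 cmUU mul1n. Qed.

Lemma hvar2 (a b : 'I_l) k1 k2 :
  hvar C a k1 * hvar C b k2 = << mmul (ucm (a, k1)) (ucm (b, k2)) >>.
Proof. by rewrite /hvar malgM_def fgmulUU mulr1. Qed.

Lemma homog2 (a b : 'I_l) k1 k2 : homog (k1 + k2).+2 (hvar C a k1 * hvar C b k2).
Proof.
rewrite hvar2 /homog msuppU1 => m /fset1P ->.
by rewrite mwtM !mwtU /=; lia.
Qed.

Lemma Hplus2 (a b : 'I_l) k1 k2 : in_Hplus (hvar C a k1 * hvar C b k2).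
Proof.
rewrite hvar2 /in_Hplus msuppU1 => m /fset1P ->.
by rewrite mdegM !mdegU.
Qed.

Lemma free2 (f a b : 'I_l) k1 k2 : f != a -> f != b ->
  freeof f (hvar C a k1 * hvar C b k2).
Proof.
move=> Hfa Hfb; rewrite hvar2 /freeof msuppU1 => m /fset1P -> j.
rewrite cmM !cmU.
case: ((a, k1) =P (f, j)) => [[E _]|_]; first by rewrite E eqxx in Hfa.
case: ((b, k2) =P (f, j)) => [[E _]|_]; first by rewrite E eqxx in Hfb.
by [].
Qed.
End S.

Section Ogen.
Variables (K : nzRingType) (W : lmodType K) (A B D : eqType).
Variables (P : A -> B -> D -> Prop) (g : A -> B -> D -> W).

Definition Ogen (x : W) : Prop :=
  exists s : seq (K * A * B * D),
    (forall e, e \in s -> P e.1.1.2 e.1.2 e.2)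
    /\ x = \sum_(e <- s) e.1.1.1 *: g e.1.1.2 e.1.2 e.2.

Lemma Ogen0 : Ogen 0.
Proof. by exists [::]; split => //; rewrite big_nil. Qed.

Lemma OgenD x y : Ogen x -> Ogen y -> Ogen (x + y).
Proof.
move=> [s1 [H1 ->]] [s2 [H2 ->]]; exists (s1 ++ s2); split.
  by move=> e; rewrite mem_cat => /orP[/H1|/H2].
by rewrite big_cat.
Qed.

Lemma OgenZ c x : Ogen x -> Ogen (c *: x).
Proof.
move=> [s [H ->]].
exists (map (fun e => (c * e.1.1.1, e.1.1.2, e.1.2, e.2)) s); split.
  by move=> e /mapP[e' /H He' ->].
rewrite big_map scaler_sumr; apply: eq_bigr => e _ /=; by rewrite scalerA.
Qed.

Lemma Ogen1 a b d : P a b d -> Ogen (g a b d).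
Proof.
move=> H; exists [:: (1, a, b, d)]; split.
  by move=> e; rewrite inE => /eqP ->.
by rewrite big_seq1 scale1r.
Qed.
End Ogen.

Section Final.
Variables (K : numFieldType) (W : comAlgType K) (O : W -> Prop).
Hypotheses (O0 : O 0) (OD : forall x y, O x -> O y -> O (x + y))
  (OZ : forall (c : K) x, O x -> O (c *: x)).
Variables (xa xb xc xd : nat -> W).

Definition Rl (f g : nat -> W) (v : W) (k1 k2 : nat) : W :=
  ((k1 + k2).+2)%:R *: (f k1 * (g k2 * v)) +
    ((k2.+1)%:R *: (f k1 * (g k2.+1 * v)) +
     (k1.+1)%:R *: (f k1.+1 * (g k2 * v))).

Hypotheses
  (Hab : forall k1 k2 k3 k4, O (Rl xa xb (xc k3 * xd k4) k1 k2))
  (Hac : forall k1 k2 k3 k4, O (Rl xa xc (xb k3 * xd k4) k1 k2))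
  (Hbc : forall k1 k2 k3 k4, O (Rl xb xc (xa k3 * xd k4) k1 k2))
  (Had : forall k1 k2 k3 k4, O (Rl xa xd (xb k3 * xc k4) k1 k2)).

Definition X k1 k2 k3 k4 := xa k1 * xb k2 * xc k3 * xd k4 * 1.

Lemma OB x y : O x -> O y -> O (x - y).
Proof. by move=> Hx Hy; rewrite -scaleN1r; apply: OD => //; apply: OZ. Qed.

Section Shift.
Variables (ka kb kc kd : nat).
Let Da := (ka.+1)%:R *: (X ka.+1 kb kc kd + X ka kb kc kd).
Let Db := (kb.+1)%:R *: (X ka kb.+1 kc kd + X ka kb kc kd).
Let Dc := (kc.+1)%:R *: (X ka kb kc.+1 kd + X ka kb kc kd).
Let Dd := (kd.+1)%:R *: (X ka kb kc kd.+1 + X ka kb kc kd).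

Lemma ODab : O (Da + Db).
Proof.
have -> : Da + Db = Rl xa xb (xc kc * xd kd) ka kb.
  rewrite /Da /Db /Rl /X !scaler_nat; ring.
exact: Hab.
Qed.


Lemma ODac : O (Da + Dc).
Proof.
have -> : Da + Dc = Rl xa xc (xb kb * xd kd) ka kc.
  rewrite /Da /Dc /Rl /X !scaler_nat; ring.
exact: Hac.
Qed.

Lemma ODbc : O (Db + Dc).
Proof.
have -> : Db + Dc = Rl xb xc (xa ka * xd kd) kb kc.
  rewrite /Db /Dc /Rl /X !scaler_nat; ring.
exact: Hbc.
Qed.

Lemma ODad : O (Da + Dd).
Proof.
have -> : Da + Dd = Rl xa xd (xb kb * xc kc) ka kd.
  rewrite /Da /Dd /Rl /X !scaler_nat; ring.
exact: Had.
Qed.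

Lemma half (x y z : W) : O (x + y) -> O (x + z) -> O (y + z) -> O x.
Proof.
move=> H1 H2 H3.
have -> : x = 2%:R^-1 *: ((x + y) + (x + z) - (y + z)).
  have -> : (x + y) + (x + z) - (y + z) = 2%:R *: x.
    rewrite scaler_nat; ring.
  by rewrite scalerA mulVf ?scale1r // pnatr_eq0.
by apply: OZ; apply: OB => //; apply: OD.
Qed.

Lemma unscale n (x : W) : O ((n.+1)%:R *: x) -> O x.
Proof.
move=> H; have -> : x = (n.+1)%:R^-1 *: ((n.+1)%:R *: x).
  by rewrite scalerA mulVf ?scale1r // pnatr_eq0.
exact: OZ.
Qed.

Lemma OXa : O (X ka.+1 kb kc kd + X ka kb kc kd).
Proof. apply: (@unscale ka); exact: (half ODab ODac ODbc). Qed.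

Lemma OXb : O (X ka kb.+1 kc kd + X ka kb kc kd).
Proof.
apply: (@unscale kb); apply: (@half _ Da Dc).
- rewrite addrC; exact: ODab.
- exact: ODbc.
- exact: ODac.
Qed.

Lemma OXc : O (X ka kb kc.+1 kd + X ka kb kc kd).
Proof.
apply: (@unscale kc); apply: (@half _ Da Db).
- rewrite addrC; exact: ODac.
- rewrite addrC; exact: ODbc.
- exact: ODab.
Qed.

Lemma OXd : O (X ka kb kc kd.+1 + X ka kb kc kd).
Proof.
apply: (@unscale kd); change (O Dd).
have -> : Dd = (Da + Dd) - Da by ring.
apply: OB; first exact: ODad.
exact: (half ODab ODac ODbc).
Qed.
End Shift.

Lemma step (Y' Y Z : W) (s : K) : O (Y' + Y) -> O (Y - s *: Z) -> O (Y' + s *: Z).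
Proof.
move=> H1 H2; have -> : Y' + s *: Z = (Y' + Y) - (Y - s *: Z) by ring.
exact: OB.
Qed.

Lemma final_gen ka kb kc kd :
  O (X ka kb kc kd - (-1) ^+ (ka + kb + kc + kd) *: X 0 0 0 0).
Proof.
have [n Hn] : exists n, (ka + kb + kc + kd)%N = n by eexists.
rewrite Hn; elim: n ka kb kc kd Hn => [|n IH] ka kb kc kd Hn.
  have E1 : ka = 0%N by lia.
  have E2 : kb = 0%N by lia.
  have E3 : kc = 0%N by lia.
  have E4 : kd = 0%N by lia.
  by rewrite E1 E2 E3 E4 expr0 scale1r subrr.
rewrite exprS mulN1r scaleNr opprK.
case: ka Hn => [|ka] Hn; last first.
  apply: step (OXa ka kb kc kd) _; apply: IH; lia.
case: kb Hn => [|kb] Hn; last first.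
  apply: step (OXb 0 kb kc kd) _; apply: IH; lia.
case: kc Hn => [|kc] Hn; last first.
  apply: step (OXc 0 0 kc kd) _; apply: IH; lia.
case: kd Hn => [|kd] Hn; last first.
  apply: step (OXd 0 0 0 kd) _; apply: IH; lia.
lia.
Qed.
End Final.

Section S.
Variables (l : nat) (C : numClosedFieldType).
Local Notation V := (Fock l C).

Definition Pz (w : nat) (u v : V) : Prop := [/\ homog w u, in_Hplus u & in_Hplus v].

Lemma inO_Ogen (x : V) : in_O_Hplus x <-> Ogen Pz (@zcirc l C) x.
Proof. split => H; exact: H. Qed.

Lemma inO0 : in_O_Hplus (0 : V).
Proof. apply/inO_Ogen; exact: Ogen0. Qed.

Lemma inOD (x y : V) : in_O_Hplus x -> in_O_Hplus y -> in_O_Hplus (x + y).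
Proof. move=> /inO_Ogen Hx /inO_Ogen Hy; apply/inO_Ogen; exact: OgenD. Qed.

Lemma inOZ (c : C) (x : V) : in_O_Hplus x -> in_O_Hplus (c *: x).
Proof. move=> /inO_Ogen Hx; apply/inO_Ogen; exact: OgenZ. Qed.

Lemma inO_rel (a b c d : 'I_l) k1 k2 k3 k4 :
  a != b -> a != c -> a != d -> b != c -> b != d ->
  in_O_Hplus (Rl (hvar C a) (hvar C b) (hvar C c k3 * hvar C d k4) k1 k2).
Proof.
move=> Hab Hac Had Hbc Hbd.
have H : in_O_Hplus (zcirc (k1 + k2).+2 (hvar C a k1 * hvar C b k2) (hvar C c k3 * hvar C d k4)).
  apply/inO_Ogen; apply: Ogen1; split.
  - exact: homog2.
  - exact: Hplus2.
  - exact: Hplus2.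
rewrite (zcirc_rel k1 k2 Hab (free2 (k1:=k3) (k2:=k4) Hac Had) (free2 (k1:=k3) (k2:=k4) Hbc Hbd)) in H.
exact: H.
Qed.
End S.


Unset Implicit Arguments.

Theorem lemma4p1p6 (l : nat) (C : numClosedFieldType) (a b c d : 'I_l)
  (Hdistinct : uniq [:: a; b; c; d])
  (m n r s : nat) (Hm : (0 < m)%N) (Hn : (0 < n)%N) (Hr : (0 < r)%N) (Hs : (0 < s)%N) :
  zhu_class_eq (S_abcd C a b c d m n r s)
    ((-1) ^+ (m + n + r + s) *: S_abcd C a b c d 1 1 1 1).
Proof.
move: Hdistinct => /= /and4P[H1 H2 H3 _].
rewrite !inE !negb_or in H1 H2 H3.
move/andP: H1 => [Hab /andP[Hac Had]].
move/andP: H2 => [Hbc Hbd].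
have Hcd : c != d := H3.
have Hba : b != a by rewrite eq_sym.
have Hca : c != a by rewrite eq_sym.
have Hcb : c != b by rewrite eq_sym.
have Hda : d != a by rewrite eq_sym.
have Hdb : d != b by rewrite eq_sym.
have Hdc : d != c by rewrite eq_sym.
have E : (-1) ^+ (m + n + r + s) = (-1) ^+ (m.-1 + n.-1 + r.-1 + s.-1)%N :> C.
  have -> : (m + n + r + s = (m.-1 + n.-1 + r.-1 + s.-1) + 2 * 2)%N by lia.
  by rewrite exprD exprM sqrr_sign mulr1.
rewrite /zhu_class_eq E.
have Rab := fun k1 k2 k3 k4 => @inO_rel l C a b c d k1 k2 k3 k4 Hab Hac Had Hbc Hbd.
have Rac := fun k1 k2 k3 k4 => @inO_rel l C a c b d k1 k2 k3 k4 Hac Hab Had Hcb Hcd.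
have Rbc := fun k1 k2 k3 k4 => @inO_rel l C b c a d k1 k2 k3 k4 Hbc Hba Hbd Hca Hcd.
have Rad := fun k1 k2 k3 k4 => @inO_rel l C a d b c k1 k2 k3 k4 Had Hab Hac Hdb Hdc.
exact: (@final_gen C (Fock l C) (@in_O_Hplus l C) (@inO0 l C) (@inOD l C) (@inOZ l C)
  (hvar C a) (hvar C b) (hvar C c) (hvar C d) Rab Rac Rbc Rad m.-1 n.-1 r.-1 s.-1).
Qed.
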